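(* Let $A$ be an abelian group of order $2n$ and let $G=Dic_{4n}(A)$ be the generalized dicyclic group induced by $A$. Then: \begin{enumerate} \item If $A$ is not isomorphic to $\mathbb{Z}_2^m\times\mathbb{Z}_4$ for any $m\in\mathbb{N}$, then $\mathcal{CD}(G)$ is a chain of length $0$; namely $\mathcal{CD}(G)=\{G\}$ if $\exp(A)=2$, and $\mathcal{CD}(G)=\{A\}$ if $\exp(A)\neq 2$. \item If $A\cong\mathbb{Z}_2^m\times\mathbb{Z}_4$ for some $m\in\mathbb{N}$, then $\mathcal{CD}(G)$ is a quasi-antichain of width $3$, namely the set of all subgroups $H$ with $Z(G)\le H\le G$. \end{enumerate}
   Context: Here $\mathbb{N}=\{0,1,2,\dots\}$. For an abelian group $A$ of order $2n$, the generalized dicyclic group induced by $A$ is $Dic_{4n}(A)=\langle A,x\mid x^4=1,\ x^2\in A\setminus\{1\},\ x^{-1}ax=a^{-1}\ \forall a\in A\rangle$ (a group of order $4n$ containing $A$ as a subgroup of index $2$). For a finite group $G$ and $H\le G$, $m_G(H)=|H|\,|C_G(H)|$, $m^*(G)=\max\{m_G(H)\mid H\le G\}$, and the Chermak-Delgado lattice is $\mathcal{CD}(G)=\{H\le G\mid m_G(H)=m^*(G)\}$. A chain of length $0$ is a one-element lattice. A lattice is a quasi-antichain of width $w$ if it consists of a least element, a greatest element, and $w$ further pairwise incomparable elements. *)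

(* Defs.v *)
From HB Require Import structures.
From mathcomp Require Import all_boot all_fingroup all_solvable all_algebra.
Set Implicit Arguments.
Unset Strict Implicit.
Unset Printing Implicit Defensive.
Local Open Scope group_scope.

Fixpoint Z2m_Z4 (m : nat) : finGroupType :=
  if m is k.+1 then (('I_2 : finGroupType) * Z2m_Z4 k)%type : finGroupType
  else ('I_4 : finGroupType).

Section CD.
Variable gT : finGroupType.

Definition mCD (G H : {set gT}) : nat := (#|H| * #|'C_G(H)|)%N.

Definition mstarCD (G : {set gT}) : nat :=
  \max_(H : {group gT} | H \subset G) mCD G H.

Definition CDlattice (G : {set gT}) : {set {group gT}} :=
  [set H : {group gT} | (H \subset G) && (mCD G H == mstarCD G)].

(* a lattice of subgroups (ordered by inclusion) is a chain of length 0 iff it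
   has exactly one element *)
Definition chain_length0 (S : {set {group gT}}) : Prop := #|S| = 1%N.

Definition quasi_antichain (S : {set {group gT}}) (w : nat) : Prop :=
  exists L U : {group gT},
    [/\ L \in S, U \in S,
        (forall H : {group gT}, H \in S -> (L \subset H) && (H \subset U)),
        #|S :\ L :\ U| = w &
        (forall H K : {group gT}, H \in S :\ L :\ U -> K \in S :\ L :\ U ->
            H \subset K -> H = K)].

End CD.

(* Main.v *)
Require Import Defs.
From HB Require Import structures.
From mathcomp Require Import all_boot all_fingroup all_solvable all_algebra.
From mathcomp Require Import zify.
Set Implicit Arguments.
Unset Strict Implicit.
Local Open Scope group_scope.

Definition is24 (i : nat) : bool := (i == 2) || (i == 4).

Lemma prod_ge (t : seq nat) : all is24 t -> (2 ^ size t <= (\prod_(i <- t) i)%N)%N.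
Proof.
elim: t => [|y t IH] /=; first by rewrite big_nil.
case/andP=> hy ht; rewrite big_cons expnS.
apply: leq_mul; last exact: IH.
by case/orP: hy => /eqP->.
Qed.

Lemma prod_eq (t : seq nat) : all is24 t -> (\prod_(i <- t) i)%N = (2 ^ size t)%N ->
  t = nseq (size t) 2.
Proof.
elim: t => [|y t IH] //= /andP[hy ht]; rewrite big_cons expnS => E.
have := prod_ge ht; case/orP: hy => /eqP Ey; subst y.
  by move=> _; rewrite -IH //; lia.
lia.
Qed.

Lemma prod_all2 (t : seq nat) : all (fun i => i == 2) t -> (\prod_(i <- t) i)%N = (2 ^ size t)%N.
Proof.
elim: t => [|y t IH] /=; first by rewrite big_nil.
by case/andP=> /eqP-> ht; rewrite big_cons expnS IH.
Qed.

Lemma seq_shape (s : seq nat) : all is24 s -> sorted geq s ->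
  (\prod_(i <- s) i)%N = (2 ^ (size s).+1)%N -> s = 4 :: nseq (size s).-1 2.
Proof.
case: s => [|x t]; first by rewrite big_nil.
move=> /= /andP[hx ht] srt; rewrite big_cons !expnS => E.
have := prod_ge ht; case/orP: hx => /eqP Ex; subst x.
  have all2 : all (fun i => i == 2) t.
    have trg : transitive geq by move=> y x z h1 h2; exact: leq_trans h2 h1.
    have := order_path_min trg srt.
    elim: t {E ht srt} (ht) => //= y t IH /andP[hy ht] /andP[hy2 ht2].
    rewrite IH // andbT. by case/orP: hy => /eqP Ey; subst y.
  move=> _; move: E; rewrite prod_all2 //; lia.
move=> _; rewrite -prod_eq //; lia.
Qed.
Lemma idx2 (gT : finGroupType) (H K : {group gT}) (a b : gT) :
  H \subset K -> #|K| = (2 * #|H|)%N -> a \in K -> b \in K -> a \notin H -> b \notin H ->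
  a * b^-1 \in H.
Proof.
move=> sHK cK Ka Kb Ha Hb.
have idx : #|rcosets H K| = 2.
  have := Lagrange sHK; rewrite cK -/(indexg H K) => E.
  change (#|K : H| = 2); have := cardG_gt0 H; nia.
have RH : (H : {set gT}) \in rcosets H K by apply/rcosetsP; exists 1; rewrite ?rcoset1.
have Ra : H :* a \in rcosets H K by apply/rcosetsP; exists a.
have Rb : H :* b \in rcosets H K by apply/rcosetsP; exists b.
have nHa : H :* a != H by apply: contraNneq Ha => <-; exact: rcoset_refl.
have nHb : H :* b != H by apply: contraNneq Hb => <-; exact: rcoset_refl.
have : [set H :* a; H :* b] \subset rcosets H K :\ (H : {set gT}).
  by apply/subsetP => C; rewrite !inE => /orP[] /eqP->; rewrite ?nHa ?nHb.
move/subset_leq_card; rewrite (cards2 (H :* a) (H :* b)) => ineq.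
have := cardsD1 (H : {set gT}) (rcosets H K); rewrite RH idx /= => E2.
case: eqP ineq => // Eab.
  by move=> _; rewrite -mem_rcoset -Eab rcoset_refl.
move: E2; set c := #|_ :\ _|; lia.
Qed.

Lemma atype (gT : finGroupType) (K : {group gT}) : abelian K ->
  #|K| = (2 * #|'Ldiv_2(K)|)%N ->
  abelian_type K = 4 :: nseq (logn 2 #|K|).-2 2.
Proof.
move=> cK hK.
have gL : group_set 'Ldiv_2(K) := group_Ldiv 2 cK.
pose LG := Group gL.
have sLK : LG \subset K by apply: subsetIl.
have hK' : #|K| = (2 * #|LG|)%N by [].
have x4 : forall a, a \in K -> a ^+ 4 = 1.
  move=> a Ka; have : a ^+ 2 \in LG.
    case: (boolP (a \in LG)) => La; first exact: groupX.
    have := idx2 sLK hK' Ka (groupVr Ka) La; rewrite groupV => /(_ La).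
    by rewrite invgK expgS expg1.
  by case/LdivP => _; rewrite -expgM.
have eK : exponent K %| 4 by apply/exponentP.
have pK : 2.-group K by rewrite -pnat_exponent (pnat_dvd eK).
have Ohm : 'Ohm_1(K) = 'Ldiv_2(K).
  by rewrite (OhmEabelian pK (abelianS (Ohm_sub 1 K) cK)) expn1.
have rk : 'r(K) = logn 2 #|'Ldiv_2(K)| by rewrite (rank_abelian_pgroup pK cK) Ohm.
have pL : 2.-group LG := pgroupS sLK pK.
have cL : #|'Ldiv_2(K)| = (2 ^ 'r(K))%N by rewrite rk; exact: (card_pgroup pL).
have [b defK tK] := abelian_structure cK.
have sz : size (abelian_type K) = 'r(K) := size_abelian_type cK.
have prd : (\prod_(i <- abelian_type K) i)%N = #|K|.
  by rewrite -tK big_map -(bigdprod_card defK).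
have all24 : all is24 (abelian_type K).
  have g1 := abelian_type_gt1 K.
  rewrite -tK all_map; apply/allP => y yb /=.
  have Ky : y \in K.
    rewrite -(bigdprodWY defK); have [b1 b2] := splitPr yb.
    by rewrite big_cat big_cons /= mem_gen // setUCA inE cycle_id.
  have d := dvdn_trans (dvdn_exponent Ky) eK.
  have gy : 1 < #[y].
    by move: g1; rewrite -tK all_map => /allP /(_ y yb).
  move: d gy; rewrite /is24; case: #[y] => [|[|[|[|[|k]]]]] //.
have shp := seq_shape all24 (abelian_type_sorted K).
rewrite prd sz hK cL -expnS in shp.
have {}shp := shp erefl.
rewrite hK cL -expnS pfactorK //= -sz shp /=.
Qed.
Lemma T_card m : #|[set: Z2m_Z4 m]| = (2 ^ m.+2)%N.
Proof.
elim: m => [|m IH]; first by rewrite cardsT card_ord.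
rewrite cardsT /= card_prod. rewrite cardsT in IH. 
by rewrite card_ord expnS; congr (_ * _)%N; exact: IH.
Qed.

Lemma T_abelian m : abelian [set: Z2m_Z4 m].
Proof.
elim: m => [|m IH].
  apply/centsP => a _ b _. apply: val_inj => /=. by rewrite addnC.
apply/centsP => -[a1 a2] _ [b1 b2] _.
have c1 : commute a1 b1 by apply: val_inj => /=; rewrite addnC.
have c2 : commute a2 b2 by apply: (centsP IH); rewrite inE.
by rewrite /commute; apply: (congr2 pair).
Qed.
Lemma dummy : True. Proof. by [].
Qed.

Lemma pairX2 (A B : finGroupType) (a : A) (b : B) : ((a, b) : (A * B)%type) ^+ 2 = (a ^+ 2, b ^+ 2).
Proof. by rewrite !expgS !expg0 !mulg1. Qed.
Lemma pair1 (A B : finGroupType) : (1 : (A * B)%type) = (1, 1).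
Proof. by []. Qed.
Lemma I2sq (a : 'I_2) : a ^+ 2 = 1.
Proof. by apply/eqP; case: a => -[|[|]]. Qed.

Lemma T_Ldiv m : #|'Ldiv_2([set: Z2m_Z4 m])| = (2 ^ m.+1)%N.
Proof.
elim: m => [|m IH].
  rewrite setTI /Ldiv.
  have -> : [set x : Z2m_Z4 0 | x ^+ 2 == 1] = [set (Ordinal (isT : 0 < 4)); Ordinal (isT : 2 < 4)].
  { apply/setP => -[[|[|[|[|k]]]] Hk]; rewrite !inE //=. }
  by rewrite cards2.
rewrite setTI /Ldiv in IH *.
have -> : [set x : Z2m_Z4 m.+1 | x ^+ 2 == 1] = setX [set: 'I_2] [set y : Z2m_Z4 m | y ^+ 2 == 1].
  apply/setP => -[a b]; rewrite !inE /=.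
  by rewrite pairX2 I2sq pair1 xpair_eqE eqxx.
rewrite setTI cardsX cardsT card_ord expnS; congr (_ * _)%N; exact: IH.
Qed.

Lemma struct_iso (gT : finGroupType) (K : {group gT}) : abelian K ->
  #|K| = (2 * #|'Ldiv_2(K)|)%N -> exists m, K \isog [set: Z2m_Z4 m].
Proof.
move=> cK hK; exists (logn 2 #|K|).-2.
rewrite (eq_abelian_type_isog cK (T_abelian _)) (atype cK hK).
rewrite (atype (T_abelian _)) ?T_card ?T_Ldiv -?expnS ?pfactorK //.
Qed.

Lemma iso_struct (gT : finGroupType) (K : {group gT}) m :
  K \isog [set: Z2m_Z4 m] -> #|K| = (2 * #|'Ldiv_2(K)|)%N.
Proof.
case/isogP => f injf fK.
have sL : 'Ldiv_2(K) \subset K := subsetIl _ _.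
rewrite -(card_injm injf (subxx _)) -(card_injm injf sL) injm_Ldiv // fK.
by rewrite T_card T_Ldiv expnS.
Qed.

Lemma comm_conj (gT : finGroupType) (a g : gT) : commute a g <-> a ^ g = a.
Proof.
rewrite conjgE; split=> [c|e].
  by rewrite c mulKg.
by rewrite /commute -{2}e mulKVg.
Qed.

Lemma inv_eq_sq (gT : finGroupType) (a : gT) : (a^-1 == a) = (a ^+ 2 == 1).
Proof. by rewrite eq_invg_mul expgS expg1. Qed.

Record dic (gT : finGroupType) (G A : {group gT}) (x : gT) : Prop := Dic {
  dic_cA : abelian A; dic_sAG : A \subset G; dic_cG : #|G| = (2 * #|A|)%N;
  dic_Gx : x \in G; dic_xA : x \notin A;
  dic_inv : forall a, a \in A -> a ^ x = a^-1 }.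

Lemma out_mul (gT : finGroupType) (G A : {group gT}) x g :
  dic G A x -> g \in G -> g \notin A -> g * x^-1 \in A.
Proof. by case=> cA sAG cG Gx xA _ Gg gA; exact: idx2 sAG cG Gg Gx gA xA. Qed.

Lemma out_conj (gT : finGroupType) (G A : {group gT}) x g a :
  dic G A x -> g \in G -> g \notin A -> a \in A -> a ^ g = a^-1.
Proof.
move=> D Gg gA Aa; have cA := dic_cA D.
have Ac := out_mul D Gg gA.
have -> : g = (g * x^-1) * x by rewrite mulgKV.
rewrite conjgM.
have -> : a ^ (g * x^-1) = a.
  by apply/comm_conj; apply: (centsP cA).
exact: dic_inv D a Aa.
Qed.

Lemma inOm (gT : finGroupType) (G A : {group gT}) x a :
  dic G A x -> a \in A -> (a \in 'C_A[x]) = (a^-1 == a).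
Proof.
move=> D Aa; apply/subcent1P/eqP => [[_ c]|e].
  have : a ^ x = a by apply/comm_conj.
  by rewrite (dic_inv D Aa).
split=> //; apply/esym/comm_conj; rewrite (dic_inv D Aa) e //.
Qed.

Lemma OmE (gT : finGroupType) (G A : {group gT}) x :
  dic G A x -> 'C_A[x] = 'Ldiv_2(A).
Proof.
move=> D; apply/setP => a; case: (boolP (a \in A)) => Aa.
  by rewrite (inOm D Aa) inv_eq_sq !inE Aa.
by rewrite !inE (negbTE Aa).
Qed.

Lemma Om_sub (gT : finGroupType) (G A : {group gT}) x :
  dic G A x -> 'C_A[x] \subset A /\ 'C_A[x] \subset G.
Proof.
move=> D; split; first exact: subsetIl.
exact: subset_trans (subsetIl _ _) (dic_sAG D).
Qed.

Lemma Om_central (gT : finGroupType) (G A : {group gT}) x w g :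
  dic G A x -> w \in 'C_A[x] -> g \in G -> commute w g.
Proof.
move=> D Ow Gg; have Aw : w \in A by case/subcent1P: Ow.
case: (boolP (g \in A)) => Ag; first exact: (centsP (dic_cA D)).
apply/comm_conj; rewrite (out_conj D Gg Ag Aw).
by apply/eqP; rewrite -(inOm D Aw).
Qed.

Lemma out_comm (gT : finGroupType) (G A : {group gT}) x g a :
  dic G A x -> g \in G -> g \notin A -> a \in A -> commute a g -> a \in 'C_A[x].
Proof.
move=> D Gg gA Aa /comm_conj; rewrite (out_conj D Gg gA Aa) => e.
by rewrite (inOm D Aa) e.
Qed.

Lemma card_le2 (gT : finGroupType) (G A K : {group gT}) x :
  dic G A x -> K \subset G -> (#|K| <= 2 * #|K :&: A|)%N.
Proof.
move=> D sKG; have := mul_cardG K A.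
have : (#|(K * A)%g| <= #|G|)%N by apply: subset_leq_card; apply: mul_subG => //; exact: dic_sAG D.
rewrite (dic_cG D) => le1 e.
have := cardG_gt0 A; nia.
Qed.

Lemma dvd_double (d m : nat) : (d %| m)%N -> (0 < m)%N -> (d < m)%N -> (2 * d <= m)%N.
Proof.
case/dvdnP=> k ->; case: k => [|[|k]] //=; first by rewrite mul1n ltnn.
move=> _ _; nia.
Qed.

Lemma proper_double (gT : finGroupType) (K L : {group gT}) :
  K \subset L -> ~~ (L \subset K) -> (2 * #|K| <= #|L|)%N.
Proof.
move=> sKL nLK; apply: dvd_double; rewrite ?cardSg ?cardG_gt0 //.
by rewrite proper_card // /proper sKL.
Qed.

Lemma between2 (gT : finGroupType) (K L P : {group gT}) :
  K \subset L -> L \subset P -> #|P| = (2 * #|K|)%N ->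
  (L :==: K) || (L :==: P).
Proof.
move=> sKL sLP cP.
case: (boolP (L \subset K)) => LK.
  by rewrite eqEsubset LK sKL.
have := proper_double sKL LK; rewrite -cP => le.
by rewrite orbC eqEcard sLP le.
Qed.

Lemma CG1 (gT : finGroupType) (G A H : {group gT}) x :
  dic G A x -> H \subset 'C_A[x] -> 'C_G(H) = G.
Proof.
move=> D sHO; apply/setIidPl; apply/centsP => g Gg h Hh.
exact/commute_sym/(Om_central D (subsetP sHO h Hh) Gg).
Qed.

Lemma CG2 (gT : finGroupType) (G A H : {group gT}) x h :
  dic G A x -> h \in H -> h \in A -> h \notin 'C_A[x] -> 'C_G(H) \subset A.
Proof.
move=> D Hh Ah hO; apply/subsetP => g /subcentP [Gg cg].
apply/negPn/negP => gA; case/negP: hO.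
exact: out_comm D Gg gA Ah (commute_sym (cg h Hh)).
Qed.

Lemma CG3 (gT : finGroupType) (G A H : {group gT}) x h :
  dic G A x -> h \in H -> h \in G -> h \notin A -> 'C_G(H) :&: A \subset 'C_A[x].
Proof.
move=> D Hh Gh hA; apply/subsetP => a /setIP [/subcentP [Ga ca] Aa].
exact: out_comm D Gh hA Aa (ca h Hh).
Qed.

Lemma abelian_out (gT : finGroupType) (G A H : {group gT}) x :
  dic G A x -> H \subset G -> H :&: A \subset 'C_A[x] -> abelian H.
Proof.
move=> D sHG sBO; apply/centsP => k Hk k' Hk'.
have Gk := subsetP sHG k Hk; have Gk' := subsetP sHG k' Hk'.
case: (boolP (k \in A)) => Ak.
  by apply: Om_central D _ Gk'; apply: (subsetP sBO); rewrite inE Hk Ak.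
case: (boolP (k' \in A)) => Ak'.
  by apply/commute_sym; apply: Om_central D _ Gk; apply: (subsetP sBO); rewrite inE Hk' Ak'.
have w : k * k'^-1 \in 'C_A[x].
  apply: (subsetP sBO); rewrite inE groupM ?groupV //=.
  exact: idx2 (dic_sAG D) (dic_cG D) Gk Gk' Ak Ak'.
have -> : k = (k * k'^-1) * k' by rewrite mulgKV.
apply: commute_sym; apply: commuteM; last exact: commute_refl.
exact/commute_sym/(Om_central D w Gk').
Qed.

Lemma mcases (gT : finGroupType) (G A H : {group gT}) x :
  dic G A x -> H \subset G ->
 [\/ H \subset 'C_A[x] /\ mCD G H = (#|H| * (2 * #|A|))%N,
     [/\ H \subset A, ~~ (H \subset 'C_A[x]) & (mCD G H <= #|H| * #|A|)%N],
     [/\ ~~ (H \subset A), H :&: A \subset 'C_A[x] &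
          (mCD G H <= 2 * #|H :&: A| * (2 * #|'C_A[x]|))%N]
   | [/\ ~~ (H \subset A), ~~ (H :&: A \subset 'C_A[x]) &
          (mCD G H <= 2 * #|H :&: A| * #|'C_A[x]|)%N]].
Proof.
move=> D sHG; rewrite /mCD.
case: (boolP (H \subset A)) => HA.
  case: (boolP (H \subset 'C_A[x])) => HO.
    by constructor 1; split=> //; rewrite (CG1 D HO) (dic_cG D).
  constructor 2; split=> //.
  case/subsetPn: HO => h Hh hO.
  have := CG2 D Hh (subsetP HA h Hh) hO => /subset_leq_card le.
  by rewrite leq_mul.
case/subsetPn: (HA) => h Hh hA.
have Gh := subsetP sHG h Hh.
have sCO := CG3 D Hh Gh hA.
have leC : (#|'C_G(H)| <= 2 * #|'C_A[x]|)%N.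
  have l1 : (#|'C_G(H)| <= 2 * #|'C_G(H) :&: A|)%N.
    exact: (card_le2 (K := 'C_G(H)%G) D (subsetIl _ _)).
  have := subset_leq_card sCO; lia.
have leH := card_le2 D sHG.
case: (boolP (H :&: A \subset 'C_A[x])) => BO.
  constructor 3; split=> //.
  by apply: leq_mul.
case/subsetPn: (BO) => b /setIP [Hb Ab] bO.
constructor 4; split=> //.
have sCA := CG2 D Hb Ab bO.
have : 'C_G(H) \subset 'C_A[x].
  by rewrite -(setIidPl sCA); exact: sCO.
move/subset_leq_card => leC2.
by apply: leq_mul.
Qed.

Lemma m_le (gT : finGroupType) (G A H : {group gT}) x :
  dic G A x -> H \subset G -> (2 * #|'C_A[x]| <= #|A|)%N -> (mCD G H <= #|A| * #|A|)%N.
Proof.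
move=> D sHG hN; have sOA : 'C_A[x] \subset A := subsetIl _ _.
case: (mcases D sHG).
- case=> HO ->; have := subset_leq_card HO; nia.
- case=> HA _ le; have := subset_leq_card HA; nia.
- case=> _ BO le; have := subset_leq_card BO; nia.
- case=> _ _ le; have := subset_leq_card (subsetIr H A); nia.
Qed.

Lemma m_eq_lt (gT : finGroupType) (G A H : {group gT}) x :
  dic G A x -> H \subset G -> (2 * #|'C_A[x]| < #|A|)%N ->
  mCD G H = (#|A| * #|A|)%N -> H :=: A.
Proof.
move=> D sHG hN E; have sOA : 'C_A[x] \subset A := subsetIl _ _.
case: (mcases D sHG).
- case=> HO; rewrite E; have := subset_leq_card HO; nia.
- case=> HA _ le; apply/eqP; rewrite eqEcard HA /=.
  by rewrite E leq_pmul2r ?cardG_gt0 in le.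
- case=> _ BO le; have := subset_leq_card BO; nia.
- case=> _ _ le; have := subset_leq_card (subsetIr H A); nia.
Qed.

Lemma m_eq_eq (gT : finGroupType) (G A H : {group gT}) x :
  dic G A x -> H \subset G -> (2 * #|'C_A[x]|)%N = #|A| ->
  mCD G H = (#|A| * #|A|)%N -> 'C_A[x] \subset H.
Proof.
move=> D sHG hN E; have sOA : 'C_A[x] \subset A := subsetIl _ _.
have N0 : 0 < #|'C_A[x]| := cardG_gt0 _.
case: (mcases D sHG).
- case=> HO E2; rewrite E -hN in E2.
  have e : (#|'C_A[x]| * (4 * #|'C_A[x]|) = #|H| * (4 * #|'C_A[x]|))%N by lia.
  have : H :==: 'C_A[x].
    move/eqP: e; rewrite eqn_pmul2r ?muln_gt0 // => /eqP e.
    by rewrite eqEcard HO e /=.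
  by move/eqP->.
- case=> HA _ le; rewrite E leq_pmul2r ?cardG_gt0 // in le.
  have : H :==: A by rewrite eqEcard HA /=.
  by move/eqP->.
- case=> _ BO le; rewrite E -hN in le.
  have : (4 * #|'C_A[x]|) * #|'C_A[x]| <= (4 * #|H :&: A|) * #|'C_A[x]| by lia.
  rewrite leq_pmul2r // => le2.
  have : H :&: A :==: 'C_A[x] by rewrite eqEcard BO /=; rewrite leq_pmul2l in le2.
  by move/eqP <-; exact: subsetIl.
- case=> _ _ le; rewrite E -hN in le.
  have : (4 * #|'C_A[x]|) * #|'C_A[x]| <= (2 * #|H :&: A|) * #|'C_A[x]| by lia.
  rewrite leq_pmul2r // => le2.
  have : H :&: A :==: A by rewrite eqEcard subsetIr /= -hN -(leq_pmul2l (isT : 0 < 2)) mulnA.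
  move/eqP=> e; apply: subset_trans sOA _; rewrite -e; exact: subsetIl.
Qed.

Lemma Om_centG (gT : finGroupType) (G A : {group gT}) x :
  dic G A x -> 'C_A[x] \subset 'C_G(G).
Proof.
move=> D; rewrite subsetI (proj2 (Om_sub D)) /=.
apply/centsP => w Ow g Gg; exact: Om_central D Ow Gg.
Qed.

Lemma m_ge (gT : finGroupType) (G A H : {group gT}) x :
  dic G A x -> H \subset G -> (2 * #|'C_A[x]|)%N = #|A| ->
  'C_A[x] \subset H -> (#|A| * #|A| <= mCD G H)%N.
Proof.
move=> D sHG hN sOH; have sOA : 'C_A[x] \subset A := subsetIl _ _.
have sAG := dic_sAG D; have cA := dic_cA D.
rewrite /mCD.
case: (boolP (H \subset A)) => HA.
  case/orP: (between2 sOH HA (esym hN)) => /eqP eH.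
    rewrite eH (CG1 (H := 'C_A[x]%G) D (subxx _)) (dic_cG D) -hN /=. move: #|_| => k; nia.
  rewrite eH.
  have : A \subset 'C_G(A) by rewrite subsetI sAG.
  by move/subset_leq_card; rewrite leq_pmul2l ?cardG_gt0.
case/subsetPn: (HA) => h Hh hA.
have sOB : 'C_A[x] \subset (H :&: A)%G by rewrite subsetI sOH sOA.
have hB : H \subset (H :&: A)%G = false.
  apply/negP => sHB; have := subsetP sHB h Hh; rewrite inE (negbTE hA) andbF //.
case/orP: (@between2 _ 'C_A[x]%G (H :&: A)%G A sOB (subsetIr H A) (esym hN)) => /eqP eB.
  have eB' : H :&: A = 'C_A[x] := eB.
  have BO : H :&: A \subset 'C_A[x] by rewrite eB'.
  have cB : #|H :&: A| = #|'C_A[x]| by rewrite eB'.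
  have cH := abelian_out D sHG BO.
  have sHC : H \subset 'C_G(H) by rewrite subsetI sHG; exact: cH.
  have le1 := subset_leq_card sHC.
  have le2 := proper_double (K := (H :&: A)%G) (L := H) (subsetIl _ _) (negbT hB).
  rewrite /= cB hN in le2.
  apply: leq_mul => //; exact: leq_trans le2 le1.
have eB' : H :&: A = A := eB.
have sAH : A \subset H by rewrite -eB'; exact: subsetIl.
case/orP: (between2 sAH sHG (dic_cG D)) => /eqP eH.
  by rewrite eH subxx in HA.
rewrite eH (dic_cG D).
have := subset_leq_card (Om_centG D).
rewrite -hN; move: #|'C_A[x]| #|'C_G(G)| => k c; nia.
Qed.

Lemma mstar_val (gT : finGroupType) (G H0 : {group gT}) V :
  (forall H : {group gT}, H \subset G -> (mCD G H <= V)%N) ->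
  H0 \subset G -> mCD G H0 = V -> mstarCD G = V.
Proof.
move=> le sH0 E; apply/eqP; rewrite eqn_leq; apply/andP; split.
  by apply/bigmax_leqP => H; apply: le.
by rewrite -E; apply: (leq_bigmax_cond (F := fun H : {group gT} => mCD G H) H0 sH0).
Qed.

Lemma CD_char (gT : finGroupType) (G : {group gT}) V :
  mstarCD G = V -> CDlattice G = [set H : {group gT} | (H \subset G) && (mCD G H == V)].
Proof. by move=> E; rewrite /CDlattice E. Qed.

Lemma grp_eq (gT : finGroupType) (H K : {group gT}) : (H :==: K) = (H == K).
Proof. by rewrite -val_eqE. Qed.

Lemma case_ab (gT : finGroupType) (G A : {group gT}) x :
  dic G A x -> 'C_A[x] = A -> CDlattice G = [set G].
Proof.
move=> D eO.
have cG : abelian G.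
  apply: (abelian_out D (subxx _)); rewrite eO; exact: subsetIr.
have CG : forall H : {group gT}, H \subset G -> 'C_G(H) = G.
  move=> H sHG; apply/setIidPl; exact: subset_trans cG (centS sHG).
have ms : mstarCD G = (#|G| * #|G|)%N.
  apply: (mstar_val (H0 := G)) => [H sHG||]; rewrite /mCD ?CG //.
  by rewrite leq_pmul2r ?cardG_gt0 // subset_leq_card.
rewrite (CD_char ms); apply/setP => H; rewrite !inE /mCD.
apply/andP/eqP => [[sHG /eqP]|->]; last by rewrite subxx CG.
rewrite CG // => /eqP; rewrite eqn_pmul2r ?cardG_gt0 // => /eqP e.
by apply/eqP; rewrite -grp_eq eqEcard sHG e leqnn.
Qed.

Lemma A_not_sub (gT : finGroupType) (G A : {group gT}) x :
  dic G A x -> 'C_A[x] != A -> exists2 a0, a0 \in A & a0 \notin 'C_A[x].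
Proof.
move=> D nO; apply/subsetPn; apply: contra nO => sAO.
by rewrite eqEsubset sAO subsetIl.
Qed.

Lemma mA (gT : finGroupType) (G A : {group gT}) x :
  dic G A x -> 'C_A[x] != A -> mCD G A = (#|A| * #|A|)%N.
Proof.
move=> D nO; have [a0 Aa0 a0O] := A_not_sub D nO.
have e : 'C_G(A) = A.
  apply/eqP; rewrite eqEsubset (CG2 D Aa0 Aa0 a0O) subsetI (dic_sAG D) /=.
  exact: dic_cA D.
by rewrite /mCD e.
Qed.

Lemma mstarA (gT : finGroupType) (G A : {group gT}) x :
  dic G A x -> 'C_A[x] != A -> mstarCD G = (#|A| * #|A|)%N.
Proof.
move=> D nO; have [a0 Aa0 a0O] := A_not_sub D nO.
have le : (2 * #|'C_A[x]| <= #|A|)%N.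
  apply: proper_double (subsetIl _ _) _; apply/subsetPn; by exists a0.
apply: (mstar_val (H0 := A)) => [H sHG||]; first exact: m_le D sHG le.
  exact: dic_sAG D.
exact: mA D nO.
Qed.

Lemma case_lt (gT : finGroupType) (G A : {group gT}) x :
  dic G A x -> (2 * #|'C_A[x]| < #|A|)%N -> CDlattice G = [set A].
Proof.
move=> D lt.
have nO : 'C_A[x] != A by apply: contraTneq lt => ->; rewrite -leqNgt leq_pmull.
rewrite (CD_char (mstarA D nO)); apply/setP => H; rewrite !inE.
apply/andP/eqP => [[sHG /eqP E]|->]; last by rewrite (dic_sAG D) (mA D nO).
by apply: val_inj; exact: m_eq_lt D sHG lt E.
Qed.

Lemma case_eq (gT : finGroupType) (G A : {group gT}) x :
  dic G A x -> (2 * #|'C_A[x]|)%N = #|A| ->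
  CDlattice G = [set H : {group gT} | ('C_A[x] \subset H) && (H \subset G)].
Proof.
move=> D hN.
have nO : 'C_A[x] != A.
  apply/eqP => e; move: hN; rewrite e; have := cardG_gt0 A; lia.
rewrite (CD_char (mstarA D nO)); apply/setP => H; rewrite !inE.
apply/andP/andP => [[sHG /eqP E]|[sOH sHG]].
  by split=> //; exact: m_eq_eq D sHG hN E.
split=> //; apply/eqP/eqP; rewrite eqn_leq (m_ge D sHG hN sOH) andbT.
exact: m_le D sHG (eq_leq hN).
Qed.

Lemma Z_eq (gT : finGroupType) (G A : {group gT}) x :
  dic G A x -> 'C_A[x] != A -> 'Z(G) = 'C_A[x].
Proof.
move=> D nO; have [a0 Aa0 a0O] := A_not_sub D nO.
apply/eqP; rewrite eqEsubset (Om_centG D) andbT.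
apply/subsetP => z /subcentP [Gz cz].
case: (boolP (z \in A)) => Az.
  apply: (out_comm D (dic_Gx D) (dic_xA D) Az).
  exact: cz _ (dic_Gx D).
case/negP: a0O; apply: (out_comm D Gz Az Aa0).
exact/commute_sym/(cz a0 (subsetP (dic_sAG D) a0 Aa0)).
Qed.

Lemma mid_card (gT : finGroupType) (G A H : {group gT}) x :
  dic G A x -> (2 * #|'C_A[x]|)%N = #|A| -> 'C_A[x] \subset H -> H \subset G ->
  H :!=: 'C_A[x] -> H :!=: G -> #|H| = #|A|.
Proof.
move=> D hN sOH sHG nHO nHG; have sOA : 'C_A[x] \subset A := subsetIl _ _.
case: (boolP (H \subset A)) => HA.
  case/orP: (between2 sOH HA (esym hN)) => /eqP eH.
    by rewrite eH eqxx in nHO.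
  by rewrite eH.
case/subsetPn: (HA) => h Hh hA.
have sOB : 'C_A[x] \subset (H :&: A)%G by rewrite subsetI sOH sOA.
have hB : H \subset (H :&: A)%G = false.
  apply/negP => sHB; have := subsetP sHB h Hh; rewrite inE (negbTE hA) andbF //.
case/orP: (@between2 _ 'C_A[x]%G (H :&: A)%G A sOB (subsetIr H A) (esym hN)) => /eqP eB.
  have le2 := proper_double (K := (H :&: A)%G) (L := H) (subsetIl _ _) (negbT hB).
  have le3 := card_le2 D sHG.
  rewrite /= eB hN in le2; rewrite eB hN in le3.
  by apply/eqP; rewrite eqn_leq le2 le3.
have sAH : A \subset H by rewrite -eB; exact: subsetIl.
case/orP: (between2 sAH sHG (dic_cG D)) => /eqP eH.
  by rewrite eH subxx in HA.
by rewrite eH eqxx in nHG.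
Qed.

Lemma Cg_sub (gT : finGroupType) (G A : {group gT}) x g :
  dic G A x -> g \in G -> 'C_A[x] \subset 'C_G[g].
Proof.
move=> D Gg; apply/subsetP => w Ow; apply/subcent1P; split.
  exact: subsetP (proj2 (Om_sub D)) w Ow.
exact/commute_sym/(Om_central D Ow Gg).
Qed.

Lemma Cg_card (gT : finGroupType) (G A : {group gT}) x g :
  dic G A x -> g \in G -> g \notin A -> (#|'C_G[g]| <= 2 * #|'C_A[x]|)%N.
Proof.
move=> D Gg gA.
have l1 : (#|'C_G[g]| <= 2 * #|'C_G[g] :&: A|)%N.
  exact: (card_le2 (K := 'C_G[g]%G) D (subsetIl _ _)).
have : 'C_G[g] :&: A \subset 'C_A[x].
  apply/subsetP => a /setIP [/subcent1P [Ga ca] Aa].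
  exact: (out_comm D Gg gA Aa (commute_sym ca)).
move/subset_leq_card; lia.
Qed.

Lemma Cg_mid (gT : finGroupType) (G A : {group gT}) x g a0 :
  dic G A x -> a0 \in A -> a0 \notin 'C_A[x] -> g \in G -> g \notin A ->
  [/\ 'C_G[g] :!=: G, 'C_G[g] :!=: 'C_A[x] & g \in 'C_G[g]].
Proof.
move=> D Aa0 a0O Gg gA.
have gC : g \in 'C_G[g] by apply/subcent1P; split.
split=> //.
  apply/eqP => e; case/negP: a0O.
  have : a0 \in 'C_G[g] by rewrite e; exact: subsetP (dic_sAG D) a0 Aa0.
  case/subcent1P => _ c; exact: (out_comm D Gg gA Aa0 (commute_sym c)).
apply/eqP => e; case/negP: gA; rewrite e in gC.
exact: subsetP (subsetIl _ _) g gC.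
Qed.

Lemma classify (gT : finGroupType) (G A H : {group gT}) x h :
  dic G A x -> (2 * #|'C_A[x]|)%N = #|A| -> 'C_A[x] \subset H -> H \subset G ->
  H :!=: 'C_A[x] -> H :!=: G -> H :!=: A -> h \in H -> h \notin A -> H :=: 'C_G[h].
Proof.
move=> D hN sOH sHG nHO nHG nHA Hh hA.
have cH := mid_card D hN sOH sHG nHO nHG.
have sOA : 'C_A[x] \subset A := subsetIl _ _.
have Gh := subsetP sHG h Hh.
have HA : ~~ (H \subset A) by apply/subsetPn; exists h.
have sOB : 'C_A[x] \subset (H :&: A)%G by rewrite subsetI sOH sOA.
case/orP: (@between2 _ 'C_A[x]%G (H :&: A)%G A sOB (subsetIr H A) (esym hN)) => /eqP eB.
  have BO : H :&: A \subset 'C_A[x] by rewrite eB.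
  have cHH := abelian_out D sHG BO.
  have sHC : H \subset 'C_G[h].
    apply/subsetP => k Hk; apply/subcent1P; split; first exact: subsetP sHG k Hk.
    exact: (centsP cHH h Hh k Hk).
  by apply/eqP; rewrite eqEcard sHC cH -hN; exact: Cg_card D Gh hA.
have sAH : A \subset H by rewrite -eB; exact: subsetIl.
case/orP: (between2 sAH sHG (dic_cG D)) => /eqP eH.
  by rewrite eH subxx in HA.
by rewrite eH eqxx in nHG.
Qed.

Lemma inv_ident (gT : finGroupType) (h x a0 : gT) :
  ((h * x^-1) * a0^-1)^-1 * h = a0 * x.
Proof. by rewrite !invMg !invgK -!mulgA mulVg mulg1. Qed.

Lemma quasi (gT : finGroupType) (G A : {group gT}) x :
  dic G A x -> (2 * #|'C_A[x]|)%N = #|A| ->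
  quasi_antichain [set H : {group gT} | ('C_A[x] \subset H) && (H \subset G)] 3.
Proof.
move=> D hN.
have nO : 'C_A[x] != A.
  apply/eqP => e; move: hN; rewrite e; have := cardG_gt0 A; lia.
have [a0 Aa0 a0O] := A_not_sub D nO.
have [sOA sOG] := Om_sub D.
have sAG := dic_sAG D; have Gx := dic_Gx D; have xA := dic_xA D.
have Ga0 := subsetP sAG a0 Aa0.
have Ga0x : a0 * x \in G by rewrite groupM.
have a0xA : a0 * x \notin A.
  by apply: contra xA => h; rewrite -(mulKg a0 x) groupM ?groupV.
set S := [set H : {group gT} | _].
have memS : forall H : {group gT}, (H \in S) = ('C_A[x] \subset H) && (H \subset G).
  by move=> H; rewrite inE.
have [nCxG nCxO xCx] := Cg_mid D Aa0 a0O Gx xA.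
have [nCaG nCaO aCa] := Cg_mid D Aa0 a0O Ga0x a0xA.
have nAG : A :!=: G.
  apply/eqP => e; have E := dic_cG D; rewrite -e in E.
  have A0 := cardG_gt0 A; move: E A0; move: #|A| => k; clear; lia.
have nAO : A :!=: 'C_A[x] by rewrite eq_sym.
have defS : S :\ 'C_A[x]%G :\ G = [set A; 'C_G[x]%G; 'C_G[a0 * x]%G].
  apply/setP => H; rewrite !inE -!grp_eq.
  apply/idP/idP.
    case/and4P => nHG nHO sOH sHG.
    case: (boolP (H :==: A)) => //= nHA.
    have HA : ~~ (H \subset A).
      apply: contra nHA => HA.
      case/orP: (between2 sOH HA (esym hN)) => // eHO.
      by rewrite eHO in nHO.
    case/subsetPn: HA => h Hh hA.
    have Gh := subsetP sHG h Hh.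
    have Ac := out_mul D Gh hA.
    case: (boolP (h * x^-1 \in 'C_A[x])) => cO.
      have xH : x \in H.
        have : (h * x^-1)^-1 * h \in H by rewrite groupM ?groupV // (subsetP sOH).
        by rewrite invMg invgK mulgKV.
      by rewrite (classify D hN sOH sHG nHO nHG nHA xH xA) eqxx.
    have w : (h * x^-1) * a0^-1 \in 'C_A[x].
      exact: (idx2 (H := 'C_A[x]%G) sOA (esym hN) Ac Aa0 cO a0O).
    have aH : a0 * x \in H.
      by rewrite -(inv_ident h) groupM ?groupV // (subsetP sOH).
    by rewrite (classify D hN sOH sHG nHO nHG nHA aH a0xA) eqxx orbT.
  case/orP => [/orP[]|] /eqP ->.
  - by rewrite nAG nAO sOA sAG.
  - by rewrite nCxG nCxO (Cg_sub D Gx) subsetIl.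
  - by rewrite nCaG nCaO (Cg_sub D Ga0x) subsetIl.
exists 'C_A[x]%G, G; split.
- by rewrite memS subxx sOG.
- by rewrite memS sOG subxx.
- by move=> H; rewrite memS.
- rewrite defS -setUA cardsU1 cards2 !inE -!grp_eq.
  have nACx : A :!=: 'C_G[x] by apply/eqP => e; rewrite -e in xCx; rewrite xCx in xA.
  have nACa : A :!=: 'C_G[a0 * x] by apply/eqP => e; rewrite -e in aCa; rewrite aCa in a0xA.
  have nCC : 'C_G[x] :!=: 'C_G[a0 * x].
    apply/eqP => e; case/negP: a0O.
    have : a0 \in 'C_G[x].
      have ax : a0 * x \in 'C_G[x] by rewrite e.
      have : (a0 * x) * x^-1 \in 'C_G[x] by rewrite groupM ?groupV.
      by rewrite mulgK.
    by case/subcent1P => _ c; apply/subcent1P; split.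
  have e1 : (A :==: 'C_G[x]%G) = false by apply/negbTE.
  have e2 : (A :==: 'C_G[a0 * x]%G) = false by apply/negbTE.
  have e3 : ('C_G[x]%G :!=: 'C_G[a0 * x]%G) = true by [].
  by rewrite e1 e2 e3.
- move=> H K; rewrite !inE -!grp_eq.
  move=> /and4P[nHG nHO sOH sHG] /and4P[nKG nKO sOK sKG] sHK.
  have cH := mid_card D hN sOH sHG nHO nHG.
  have cK := mid_card D hN sOK sKG nKO nKG.
  by apply: val_inj; apply/eqP; rewrite eqEcard sHK cH cK /=.
Qed.

Lemma exp2_of (gT : finGroupType) (A : {group gT}) :
  A :!=: 1 -> (forall a, a \in A -> a ^+ 2 = 1) -> exponent A = 2%N.
Proof.
move=> nt h; have d : exponent A %| 2 by apply/exponentP.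
have : ~~ (exponent A %| 1) by rewrite -trivg_exponent.
have := exponent_gt0 A.
move: d; case: (exponent A) => [|[|[|k]]] //.
Qed.

Unset Implicit Arguments.
Set Strict Implicit.

Theorem theorem3p1 (gT : finGroupType) (G A : {group gT}) (x : gT) (n : nat) :
  abelian A -> #|A| = (2 * n)%N ->
  A \subset G -> #|G| = (4 * n)%N ->
  x \in G -> G = A <*> <[x]> ->
  x ^+ 4 = 1 -> x ^+ 2 \in A -> x ^+ 2 != 1 ->
  (forall a, a \in A -> a ^ x = a^-1) ->
  ((forall m : nat, ~ (A \isog [set: Z2m_Z4 m])) ->
     chain_length0 (CDlattice G) /\
     (exponent A = 2%N -> CDlattice G = [set G]) /\
     (exponent A != 2%N -> CDlattice G = [set A]))
  /\
  ((exists m : nat, A \isog [set: Z2m_Z4 m]) ->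
     quasi_antichain (CDlattice G) 3 /\
     CDlattice G = [set H : {group gT} | ('Z(G) \subset H) && (H \subset G)]).
Proof.
move=> cA cardA sAG cardG Gx defG x4 x2A x2n inv.
have n0 : (0 < n)%N.
  have := cardG_gt0 A; rewrite cardA; clear; lia.
have xA : x \notin A.
  apply/negP => xA; have e : A <*> <[x]> = A by apply/joing_idPl; rewrite cycle_subG.
  have eG : (G : {set gT}) = A by rewrite defG /= e.
  move: cardG; rewrite eG cardA; clear -n0; lia.
have cG : #|G| = (2 * #|A|)%N by rewrite cardG cardA; clear; lia.
have D : dic G A x := Dic cA sAG cG Gx xA inv.
have OL := OmE D.
have ntA : A :!=: 1.
  apply/eqP => A1; move: x2A; rewrite A1 inE; exact/negP.
have hLd : forall a, a \in A -> a \in 'C_A[x] -> a ^+ 2 = 1.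
  by move=> a Aa; rewrite OL => /LdivP [].
split.
  move=> niso.
  case: (eqVneq 'C_A[x] (A : {set gT})) => eO.
    have e2 : exponent A = 2%N.
      have := exp2_of ntA; apply => a Aa; apply: (hLd a Aa); by rewrite eO.
    rewrite (case_ab D eO); split; first exact: cards1.
    by split=> // /eqP; rewrite e2.
  have [a0 Aa0 a0O] := A_not_sub D eO.
  have le : (2 * #|'C_A[x]| <= #|A|)%N.
    apply: proper_double (subsetIl _ _) _; apply/subsetPn; by exists a0.
  have lt : (2 * #|'C_A[x]| < #|A|)%N.
    rewrite ltn_neqAle le andbT; apply/negP => /eqP e.
    have e' : #|A| = (2 * #|'Ldiv_2(A)|)%N by rewrite -OL e.
    have [m im] := struct_iso cA e'.
    exact: niso m im.
  rewrite (case_lt D lt); split; first exact: cards1.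
  split=> // e2; case/negP: a0O; rewrite OL; apply/LdivP; split=> //.
  by rewrite -e2; apply: expg_exponent.
case=> m im.
have hN : (2 * #|'C_A[x]|)%N = #|A| by rewrite OL -(iso_struct im).
have nO : 'C_A[x] != A.
  apply/eqP => e; move: hN; rewrite e; have := cardG_gt0 A; clear; lia.
rewrite (case_eq D hN) (Z_eq D nO); split=> //.
exact: quasi D hN.
Qed.
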